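(* Let $\mu$ be a partition of $n$ and consider its modified GP-tree. Every filling at Level 0 is a row-strict filling of $\mu$, and for each Level 0 filling $T$, $\Phi(T)$ equals the monomial labelling the Level B leaf below $T$.
   Context: Compositions: sequences of nonnegative integers summing to $n$, drawn with $\rho_k$ left-justified boxes in row $k$ (rows top to bottom). Row-strict filling: bijective placement of $1,\dots,n$ with entries increasing left to right in rows. Dimension-ordering of a composition with $r$ nonzero rows: label the far-right boxes of nonzero rows $1,\dots,r$, ordering them by column from rightmost to leftmost, and within a column top to bottom. Modified GP-tree of $\mu$: Level $n$ has the single vertex $\mu$ with no boxes filled. A vertex at Level $i$ ($1\le i\le n$) is $\mu$ with the values $i+1,\dots,n$ placed in some boxes, such that the unfilled boxes in each row form an initial (leftmost) segment, i.e. the unfilled boxes form a composition $\mu^{(i)}$ of $i$. If $\mu^{(i)}$ has $r$ nonzero rows, the vertex has $r$ children at Level $i-1$, joined by edges labelled $x_i^0,x_i^1,\dots,x_i^{r-1}$ (left to right); the child along edge $x_i^j$ is obtained by imposing the dimension-ordering on $\mu^{(i)}$ and placing the value $i$ into the unfilled box with label $j+1$. Level 0 thus consists of complete fillings of $\mu$; each Level 0 vertex has a unique child leaf at Level B joined by an edge labelled $1$, and each leaf is labelled by the product of all edge labels on the path from the root. Dimension pairs (with $h(j)=j$): $(a,b)$ is a dimension pair of a filling $T$ if $b>a$; $b$ lies in the same column as $a$ strictly below it or in a column strictly left of $a$'s; and if a box immediately right of $a$ contains $c$, then $b\le c$. $\Phi(T)=\prod_{j=2}^n x_j^{|D^T_j|}$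 where $D^T_j$ is the set of dimension pairs $(a,j)$. *)

(* Defs.v *)
From mathcomp Require Import all_boot.
Set Implicit Arguments. Unset Strict Implicit. Unset Printing Implicit Defensive.

(* A (partial) filling of a composition: row k is a list of its entries,
   left to right; the value 0 marks an unfilled box (values are 1..n). *)
Definition filling := seq (seq nat).

(* A monomial in x_1, x_2, ... : its exponent function (t |-> exponent of x_t). *)
Definition monomial := nat -> nat.

Definition is_partition (mu : seq nat) (n : nat) : bool :=
  (sumn mu == n) && sorted geq mu.

Definition empty_filling (mu : seq nat) : filling := [seq nseq m 0 | m <- mu].

Definition unfilled (F : filling) : seq nat := [seq count (pred1 0) row | row <- F].

(* Dimension-ordering of a composition u: the nonzero rows, ordered by the
   column of their far-right box (rightmost first), ties broken top to bottom.
   The element at index j (0-based) carries label j+1. *)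
Definition dim_order (u : seq nat) : seq nat :=
  sort (fun k l => (nth 0 u l < nth 0 u k) || ((nth 0 u k == nth 0 u l) && (k <= l)))
       [seq k <- iota 0 (size u) | 0 < nth 0 u k].

Definition nchildren (F : filling) : nat := size (dim_order (unfilled F)).

(* Child of F along edge x_i^j: place i in the unfilled box with label j+1. *)
Definition place (F : filling) (i j : nat) : filling :=
  let u := unfilled F in
  let k := nth 0 (dim_order u) j in
  set_nth [::] F k (set_nth 0 (nth [::] F k) (nth 0 u k).-1 i).

(* gp_path mu i F m : F is a vertex at Level i of the modified GP-tree of mu,
   and m is the product of the edge labels on the path from the root to F. *)
Inductive gp_path (mu : seq nat) : nat -> filling -> monomial -> Prop :=
| gp_root : gp_path mu (sumn mu) (empty_filling mu) (fun _ => 0)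
| gp_step : forall i F m j, 0 < i -> gp_path mu i F m -> j < nchildren F ->
    gp_path mu i.-1 (place F i j) (fun t => m t + (t == i) * j).

Definition row_strict (mu : seq nat) (n : nat) (T : filling) : bool :=
  [&& shape T == mu, perm_eq (flatten T) (iota 1 n) & all (sorted ltn) T].

Definition boxes (T : filling) : seq (nat * nat) :=
  [seq (r, c) | r <- iota 0 (size T), c <- iota 0 (size (nth [::] T r))].
Definition ent (T : filling) (p : nat * nat) : nat := nth 0 (nth [::] T p.1) p.2.

(* (a, b) is a dimension pair of T (with h(j) = j). *)
Definition dim_pair (T : filling) (a b : nat) : bool :=
  (a < b) &&
  has (fun pa => (ent T pa == a) &&
     has (fun pb => [&& ent T pb == b,
                        ((pb.2 == pa.2) && (pa.1 < pb.1)) || (pb.2 < pa.2)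
                      & (if pa.2.+1 < size (nth [::] T pa.1)
                         then b <= ent T (pa.1, pa.2.+1) else true)])
       (boxes T))
    (boxes T).

Definition D_card (T : filling) (n j : nat) : nat :=
  count (fun a => dim_pair T a j) (iota 1 n).

Definition Phi (n : nat) (T : filling) : monomial :=
  fun t => if (2 <= t) && (t <= n) then D_card T n t else 0.

(* Main.v *)
Require Import Defs.
From mathcomp Require Import all_boot.
From Stdlib Require Import Lia.
Set Implicit Arguments. Unset Strict Implicit. Unset Printing Implicit Defensive.

Lemma uniq_map_inj (T1 T2 : eqType) (f : T1 -> T2) (s : seq T1) x y :
  uniq (map f s) -> x \in s -> y \in s -> f x = f y -> x = y.
Proof.
elim: s => //= a s IH /andP[Ha Hu]; rewrite !in_cons.
case/orP=> [/eqP->|Hx]; case/orP=> [/eqP->|Hy] //.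
- by move=> E; move: Ha; rewrite E map_f.
- by move=> E; move: Ha; rewrite -E map_f.
- exact: IH.
Qed.

Lemma has_inj (T1 T2 : eqType) (f : T1 -> T2) (s : seq T1) y (P : pred T1) :
  uniq (map f s) -> y \in s -> has (fun x => (f x == f y) && P x) s = P y.
Proof.
move=> U Ys; apply/hasP/idP.
- by case=> x Xs /andP[/eqP E Px]; rewrite -(uniq_map_inj U Xs Ys E).
- by move=> Py; exists y => //; rewrite eqxx.
Qed.

Lemma sumn_bool (T : Type) (P : pred T) s : sumn [seq (P x : nat) | x <- s] = count P s.
Proof. by elim: s => //= x s ->. Qed.

Lemma count_flatten_set_nth (T : Type) (p : pred T) (F : seq (seq T)) k y :
  k < size F ->
  count p (flatten (set_nth [::] F k y)) + count p (nth [::] F k)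
  = count p (flatten F) + count p y.
Proof.
elim: F k => [|r F IH] [|k] //=.
  by move=> _; rewrite !count_cat addnAC [RHS]addnC addnA.
rewrite ltnS => /IH; rewrite !count_cat -!addnA => <-. by rewrite !addnA.
Qed.

Lemma count_row_le (T : eqType) (p : pred T) (F : seq (seq T)) r :
  r \in F -> count p r <= count p (flatten F).
Proof.
elim: F => //= a F IH; rewrite in_cons count_cat => /orP[/eqP->|/IH H].
  exact: leq_addr.
by rewrite (leq_trans H) // leq_addl.
Qed.

Lemma find_set_nth (T : Type) (p : pred T) x0 (s : seq T) k y :
  k < size s -> p y = p (nth x0 s k) -> find p (set_nth x0 s k y) = find p s.
Proof.
elim: s k => [|a s IH] [|k] //=.
- by move=> _ ->.
- by move=> /IH H /H ->.
Qed.

Lemma find_eq (T : Type) (p : pred T) x0 (s : seq T) k :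
  k < size s -> p (nth x0 s k) -> (forall r, r < size s -> r != k -> ~~ p (nth x0 s r)) ->
  find p s = k.
Proof.
move=> Hk Pk Hr.
have Hs : has p s by apply/(has_nthP x0); exists k.
have Hf : find p s < size s by rewrite -has_find.
case: (ltngtP (find p s) k) => // H.
- by move: (Hr _ Hf (negbT (ltn_eqF H))) ; rewrite (nth_find x0 Hs).
- by move: (before_find x0 H); rewrite Pk.
Qed.


Lemma prefix_lt (s : seq nat) t c : sorted ltn s -> c < size s ->
  (nth 0 s c < t) = (c < count (fun x => x < t) s).
Proof.
elim: s c => [|x s IH] c // Hs.
have Hs' : sorted ltn s by exact: path_sorted Hs.
have Ha : all (ltn x) s := order_path_min ltn_trans Hs.
have E : count (fun y => y < t) (x::s) = (x < t) + count (fun y => y < t) s by [].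
have Z : t <= x -> count (fun y => y < t) s = 0.
  move=> Hxt; apply/eqP; rewrite -leqn0 leqNgt -has_count; apply/hasP => -[y Ys Yt].
  by move/allP: Ha => /(_ _ Ys) Hxy; move: (leq_ltn_trans Hxt (ltn_trans Hxy Yt)); rewrite ltnn.
rewrite E; case: c => [|c] Hc.
  change (nth 0 (x :: s) 0) with x.
  case: (ltnP x t) => Hxt; first by rewrite add1n.
  by rewrite (Z Hxt).
change (nth 0 (x :: s) c.+1) with (nth 0 s c).
rewrite ltnS in Hc; rewrite (IH c Hs' Hc).
case: (ltnP x t) => Hxt; first by rewrite add1n.
by rewrite (Z Hxt).
Qed.

Lemma count_lt_nth (s : seq nat) c : sorted ltn s -> c < size s ->
  count (fun x => x < nth 0 s c) s = c.
Proof.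
elim: s c => [|x s IH] c // Hs.
have Hs' : sorted ltn s by exact: path_sorted Hs.
have Ha : all (ltn x) s := order_path_min ltn_trans Hs.
case: c => [|c] Hc.
  change (nth 0 (x :: s) 0) with x.
  change (count (fun y => y < x) (x :: s)) with ((x < x) + count (fun y => y < x) s).
  rewrite ltnn add0n; apply/eqP; rewrite -leqn0 leqNgt -has_count; apply/hasP => -[y Ys Yt].
  by move/allP: Ha => /(_ _ Ys) Hxy; move: (ltn_trans Hxy Yt); rewrite ltnn.
change (nth 0 (x :: s) c.+1) with (nth 0 s c).
rewrite ltnS in Hc.
change (count _ (x :: s)) with ((x < nth 0 s c) + count (fun y => y < nth 0 s c) s).
have -> : x < nth 0 s c by move/allP: Ha; apply; exact: mem_nth.
by rewrite (IH c Hs' Hc).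
Qed.

Lemma row_count (s : seq nat) t (Pc : pred nat) : sorted ltn s ->
  count (fun c => [&& nth 0 s c < t, Pc c & (if c.+1 < size s then t <= nth 0 s c.+1 else true)])
    (iota 0 (size s))
  = (0 < count (fun x => x < t) s) && Pc (count (fun x => x < t) s).-1.
Proof.
move=> Hs; set L := count _ s.
have LS : L <= size s by exact: count_size.
have key : forall c, c < size s ->
   ((nth 0 s c < t) && (if c.+1 < size s then t <= nth 0 s c.+1 else true)) = (c.+1 == L).
  move=> c Hc; rewrite (prefix_lt _ Hs Hc) -/L.
  have -> : (if c.+1 < size s then t <= nth 0 s c.+1 else true) = (L <= c.+1).
    case: ifP => H; first by rewrite [t <= _]leqNgt (prefix_lt _ Hs H) -leqNgt.
    by apply/esym/(leq_trans LS); rewrite leqNgt H.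
  by rewrite eqn_leq andbC.
rewrite (@eq_in_count _ _ (fun c => (c.+1 == L) && Pc c)); last first.
  move=> c; rewrite mem_iota add0n => /andP[_ Hc].
  by rewrite -(key c Hc); case: (_ < t); case: (Pc c); rewrite /= ?andbT ?andbF.
clearbody L; clear key.
case: L LS => [|L] LS.
  by apply/eqP; rewrite -leqn0 leqNgt -has_count; apply/hasP=> -[c _ /andP[]].
rewrite (@eq_count _ _ (fun c => (c == L) && Pc L)); last first.
  by move=> c; rewrite eqSS; case: eqP => [->|].
case: (Pc L).
  rewrite (@eq_count _ _ (pred1 L)); last by move=> c; rewrite andbT.
  by rewrite count_uniq_mem ?iota_uniq // mem_iota add0n LS.
by rewrite andbF (@eq_count _ _ pred0) ?count_pred0 // => c; rewrite andbF.
Qed.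


Lemma dim_index (u : seq nat) j : j < size (dim_order u) ->
  count (fun r => (r != nth 0 (dim_order u) j) &&
     ((nth 0 u (nth 0 (dim_order u) j) < nth 0 u r) ||
      ((nth 0 u r == nth 0 u (nth 0 (dim_order u) j)) && (r < nth 0 (dim_order u) j))))
    (iota 0 (size u)) = j.
Proof.
set D := dim_order u; set k := nth 0 D j => Hj.
pose R := fun k l => (nth 0 u l < nth 0 u k) || ((nth 0 u k == nth 0 u l) && (k <= l)).
pose S := [seq k <- iota 0 (size u) | 0 < nth 0 u k].
have DE : D = sort R S by [].
have Rtr : transitive R.
  move=> b a c; rewrite /R => /orP[H1|/andP[/eqP E1 H1]] /orP[H2|/andP[/eqP E2 H2]].
  - by rewrite (ltn_trans H2 H1).
  - by rewrite -E2 H1.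
  - by rewrite E1 H2.
  - by rewrite E1 E2 eqxx (leq_trans H1 H2) orbT.
have Rtot : total R.
  move=> a b; rewrite /R; case: (ltngtP (nth 0 u a) (nth 0 u b)) => //= E.
  by rewrite leq_total.
have Dun : uniq D by rewrite DE sort_uniq filter_uniq // iota_uniq.
have kD : k \in D by exact: mem_nth.
have kpos : 0 < nth 0 u k by move: kD; rewrite DE mem_sort mem_filter => /andP[].
set P := fun r => _.
have PP : forall r, P r -> 0 < nth 0 u r.
  move=> r /andP[_ /orP[H|/andP[/eqP E _]]]; first exact: leq_ltn_trans H.
  by rewrite E.
have -> : count P (iota 0 (size u)) = count P S.
  rewrite count_filter; apply: eq_count => r /=.
  by case Pr: (P r) => //=; rewrite PP.
have pS : perm_eq D S by rewrite DE perm_sort perm_refl.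
rewrite -(permP pS).
have Dpw : pairwise R D by rewrite -(sorted_pairwise Rtr) DE sort_sorted.
have Dsplit : D = take j D ++ k :: drop j.+1 D by rewrite -drop_nth // cat_take_drop.
move: Dpw Dun; rewrite Dsplit pairwise_cat cat_uniq /= => /and3P[Hrel _ /andP[Hk _]].
move=> /and3P[_ /norP[kt _] _].
rewrite count_cat /= .
have -> : P k = false by rewrite /P eqxx.
have -> : count P (take j D) = j.
  rewrite (@eq_in_count _ _ predT) ?count_predT ?size_take ?Hj //.
  move=> x xt; move/allrelP: Hrel => /(_ x k xt (mem_head _ _)).
  have xk : x != k by apply: contraNneq kt => <-.
  rewrite /P xk /R /= => /orP[->//|/andP[-> H]].
  by rewrite [x < k]ltn_neqAle xk H orbT.
have -> : count P (drop j.+1 D) = 0.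
  rewrite (@eq_in_count _ _ pred0) ?count_pred0 // => y yd.
  move/allP: Hk => /(_ y yd); rewrite /R /P /=.
  case: (ltngtP (nth 0 u k) (nth 0 u y)) => //=; first by rewrite andbF.
  by move=> _ H; rewrite ltnNge H andbF.
by rewrite /= !addn0.
Qed.


Ltac slia := repeat match goal with
  | H : is_true (_ <= _) |- _ => move/leP: H => H
  | H : is_true (_ < _) |- _ => move/ltP: H => H
  | H : is_true (_ == _) |- _ => move/eqP: H => H
  | H : is_true (~~ (_ == _)) |- _ => move/eqP: H => H
  | |- is_true (_ <= _) => apply/leP
  | |- is_true (_ < _) => apply/ltP
  | |- is_true (_ == _) => apply/eqP
  end; unfold addn, addn_rec, subn, subn_rec, muln, muln_rec in *; lia.

Definition Lc (F : filling) r t := count (fun x => x < t) (nth [::] F r).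
Definition krow (F : filling) t := find (fun row : seq nat => t \in row) F.
Definition Q (F : filling) t :=
  count (fun r => ((Lc F (krow F t) t).+1 < Lc F r t) ||
                  ((Lc F r t == (Lc F (krow F t) t).+1) && (r < krow F t)))
        (iota 0 (size F)).

Definition Inv (mu : seq nat) n i (F : filling) (m : monomial) :=
 [/\ i <= n, size F = size mu,
  forall r, r < size F -> size (nth [::] F r) = nth 0 mu r /\
     exists z s, nth [::] F r = nseq z 0 ++ s /\ sorted ltn s /\ all (fun x => i < x <= n) s,
  forall x, count (pred1 x) (flatten F) = if x == 0 then i else (i < x <= n) &
  forall t, m t = if (i < t <= n) then Q F t else 0].

Lemma inv_root mu : Inv mu (sumn mu) (sumn mu) (empty_filling mu) (fun _ => 0).
Proof.
split => //.
- by rewrite size_map.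
- move=> r; rewrite size_map => Hr; rewrite (nth_map 0) //; split; first by rewrite size_nseq.
  by exists (nth 0 mu r), [::]; rewrite cats0.
- move=> x.
  have -> : (sumn mu < x <= sumn mu) = false by rewrite ltnNge; case: (x <= sumn mu).
  rewrite /empty_filling; case: eqP => [->|/eqP x0].
    by elim: (mu) => //= a l IH; rewrite count_cat count_nseq /= mul1n IH.
  elim: (mu) => //= a l IH; rewrite count_cat count_nseq /= IH.
  by rewrite eq_sym (negbTE x0).
- move=> t.
  by have -> : (sumn mu < t <= sumn mu) = false by rewrite ltnNge; case: (t <= sumn mu).
Qed.

Lemma set_row z (s : seq nat) i :
  set_nth 0 (nseq z.+1 0 ++ s) z i = nseq z 0 ++ i :: s.
Proof. by elim: z => //= z ->. Qed.

Lemma cnt0_row z (s : seq nat) i n :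
  all (fun x => i < x <= n) s -> count (pred1 0) (nseq z 0 ++ s) = z.
Proof.
move=> As; rewrite count_cat count_nseq /= mul1n.
rewrite (@eq_in_count _ _ pred0) ?count_pred0 ?addn0 // => x /(allP As) /andP[H _].
by case: x H.
Qed.

Lemma cntlt_row z (s : seq nat) t :
  0 < t -> count (fun x => x < t) (nseq z 0 ++ s) = z + count (fun x => x < t) s.
Proof. by move=> Ht; rewrite count_cat count_nseq Ht mul1n. Qed.

Lemma inv_step mu n i F m j :
  Inv mu n i F m -> 0 < i -> j < nchildren F ->
  Inv mu n i.-1 (place F i j) (fun t => m t + (t == i) * j).
Proof.
move=> [Hin Hsz Hrows Hcnt Hm] Hi Hj.
set u := unfilled F; set D := dim_order u; set k := nth 0 D j.
have kD : k \in D by exact: mem_nth.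
have su : size u = size F by rewrite size_map.
have [Hk upos] : k < size F /\ 0 < nth 0 u k.
  move: kD; rewrite mem_sort mem_filter mem_iota add0n su => /andP[-> /andP[_ ->]] //.
have uk : forall r, r < size F -> nth 0 u r = count (pred1 0) (nth [::] F r).
  by move=> r Hr; rewrite (nth_map [::]).
have [szk [z [s [Ek [Ss As]]]]] := Hrows k Hk.
have zE : nth 0 u k = z by rewrite uk // Ek (cnt0_row _ As).
case: z Ek zE => [|z] Ek zE; first by rewrite zE in upos.
set newrow := nseq z 0 ++ i :: s.
have PE : place F i j = set_nth [::] F k newrow.
  by rewrite /place -/u -/D -/k zE Ek set_row.
rewrite PE; set F' := set_nth [::] F k newrow.
have sF' : size F' = size F by rewrite size_set_nth; apply/maxn_idPr.
have nF' : forall r, nth [::] F' r = if r == k then newrow else nth [::] F r.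
  by move=> r; rewrite nth_set_nth.
split.
- exact: leq_trans (leq_pred i) Hin.
- by rewrite sF'.
- move=> r; rewrite sF' nF' => Hr; case: eqP => [->|/eqP rk]; last first.
    have [-> [z' [s' [E' [S' A']]]]] := Hrows r Hr; split => //.
    exists z', s'; split => //; split => //; apply: sub_all A' => x /andP[H1 ->].
    by rewrite andbT; exact: leq_ltn_trans (leq_pred i) H1.
  split; first by rewrite -szk Ek /newrow !size_cat !size_nseq /= addnS.
  exists z, (i :: s); split => //; split.
    by rewrite /= (path_sortedE ltn_trans) Ss andbT; apply: sub_all As => x /andP[].
  rewrite /= ltn_predL Hi /=; apply/andP; split.
    exact: Hin.
  by apply: sub_all As => x /andP[H1 ->]; rewrite andbT; exact: leq_ltn_trans (leq_pred i) H1.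
- move=> x; have := count_flatten_set_nth (pred1 x) newrow Hk.
  rewrite -/F' Hcnt Ek /newrow !count_cat !count_nseq /=.
  case: x => [|x] /=.
    rewrite (negbTE (lt0n_neq0 Hi)) /= => H; slia.
  case: (ltngtP i x.+1) => Hix.
  - have -> : i.-1 < x.+1 by exact: leq_ltn_trans (leq_pred i) Hix.
    by case: (x < n) => /= H; slia.
  - have -> : i.-1 < x.+1 = false by apply/negbTE; rewrite -leqNgt -ltnS prednK.
    by move=> /= H; slia.
  - move=> H; rewrite -Hix ltn_predL Hi Hin /=; rewrite -Hix /= in H; slia.
have Qinv : forall t, i < t -> Q F' t = Q F t.
  move=> t Hit; have t0 : 0 < t by exact: leq_ltn_trans (leq0n i) Hit.
  have LcE : forall r, Lc F' r t = Lc F r t.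
    move=> r; rewrite /Lc nF'; case: eqP => [->|] //.
    by rewrite Ek /newrow !cntlt_row //= Hit add1n addnS.
  have kE : krow F' t = krow F t.
    rewrite /krow /F' find_set_nth // Ek /newrow !mem_cat !mem_nseq in_cons.
    by rewrite (gtn_eqF Hit) (negbTE (lt0n_neq0 t0)) !andbF.
  by rewrite /Q sF' kE; apply: eq_count => r; rewrite !LcE.
have Qi : Q F' i = j.
  have iF : forall r, r < size F -> r != k -> i \notin nth [::] F r.
    move=> r Hr rk; have [_ [z' [s' [E' [_ A']]]]] := Hrows r Hr.
    rewrite E' mem_cat mem_nseq (negbTE (lt0n_neq0 Hi)) andbF /=.
    by apply/negP => /(allP A') /andP[]; rewrite ltnn.
  have kE : krow F' i = k.
    rewrite /krow; apply: (@find_eq _ _ [::]); first by rewrite sF'.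
      by rewrite nF' eqxx /newrow mem_cat in_cons eqxx orbT.
    by move=> r; rewrite sF' nF' => Hr rk; rewrite (negbTE rk); exact: iF.
  have Lk : Lc F' k i = z.
    rewrite /Lc nF' eqxx /newrow cntlt_row //= ltnn add0n.
    rewrite (@eq_in_count _ _ pred0) ?count_pred0 ?addn0 // => x /(allP As) /andP[H _].
    by rewrite ltnNge (ltnW H).
  have Lr : forall r, r < size F -> r != k -> Lc F' r i = nth 0 u r.
    move=> r Hr rk; have [_ [z' [s' [E' [_ A']]]]] := Hrows r Hr.
    rewrite /Lc nF' (negbTE rk) uk // E' (cnt0_row _ A') cntlt_row //.
    rewrite (@eq_in_count _ _ pred0) ?count_pred0 ?addn0 // => x /(allP A') /andP[H _].
    by rewrite ltnNge (ltnW H).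
  rewrite -{1}(dim_index Hj) -/D -/k /Q kE Lk sF' -su.
  apply: eq_in_count => r; rewrite mem_iota add0n su => /andP[_ Hr].
  case: (r =P k) => [->|/eqP rk].
    rewrite Lk ltnn andbF /=.
    have -> : (z.+1 < z) = false by rewrite ltnNge leqnSn.
    by [].
  by rewrite Lr // zE.
move=> t; rewrite Hm.
case: (ltngtP t i) => Hti.
- have -> : i.-1 < t = false by rewrite -[i.-1 < t]/(i.-1.+1 <= t) prednK // leqNgt Hti.
  by [].
- have -> : i.-1 < t by exact: leq_ltn_trans (leq_pred i) Hti.
  by rewrite /= Qinv // mul0n addn0.
- by rewrite /= add0n mul1n Hti ltn_predL Hi Hin /= Qi.
Qed.


Lemma boxesE (T : filling) : boxes T =
  flatten [seq [seq (r, c) | c <- iota 0 (size (nth [::] T r))] | r <- iota 0 (size T)].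
Proof. by []. Qed.

Lemma map_ent_boxes (T : filling) : map (ent T) (boxes T) = flatten T.
Proof.
rewrite boxesE map_flatten -map_comp.
rewrite (@eq_map _ _ _ (nth [::] T)); first by rewrite -/(mkseq _ _) mkseq_nth.
by move=> r /=; rewrite -map_comp -/(mkseq _ _) (@eq_mkseq _ _ (nth 0 (nth [::] T r))) // mkseq_nth.
Qed.

Lemma mem_boxes (T : filling) r c :
  ((r, c) \in boxes T) = (r < size T) && (c < size (nth [::] T r)).
Proof.
apply/allpairsPdep/andP.
  by case=> x [y [Hx Hy [-> ->]]]; move: Hx Hy; rewrite !mem_iota !add0n.
by case=> Hr Hc; exists r, c; rewrite !mem_iota !add0n Hr Hc.
Qed.

Lemma key_D (T : filling) n t :
  (forall r, r < size T -> sorted ltn (nth [::] T r)) ->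
  perm_eq (flatten T) (iota 1 n) -> t \in flatten T ->
  D_card T n t = Q T t.
Proof.
move=> HS Hp tT.
have U : uniq (map (ent T) (boxes T)) by rewrite map_ent_boxes (perm_uniq Hp) iota_uniq.
have [[k c] pbB Epb] : exists2 pb, pb \in boxes T & ent T pb = t.
  by move: tT; rewrite -map_ent_boxes => /mapP[pb H ->]; exists pb.
move: (pbB); rewrite mem_boxes => /andP[Hk Hc].
have kE : krow T t = k.
  rewrite /krow; apply: (@find_eq _ _ [::]) => //.
    by rewrite -Epb /ent /=; exact: mem_nth.
  move=> r Hr rk; apply/negP => /(nthP 0) [c' Hc' E'].
  have rB : (r, c') \in boxes T by rewrite mem_boxes Hr Hc'.
  have := uniq_map_inj U rB pbB; rewrite Epb {1}/ent /= E' => /(_ erefl) [] Er _.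
  by rewrite Er eqxx in rk.
have cE : Lc T k t = c by rewrite /Lc -Epb /ent /= count_lt_nth // HS.
rewrite /D_card -(permP Hp) -map_ent_boxes count_map.
rewrite (@eq_in_count _ _ (fun pa => (ent T pa < t) &&
   ((((c == pa.2) && (pa.1 < k)) || (c < pa.2)) &&
    (if pa.2.+1 < size (nth [::] T pa.1) then t <= ent T (pa.1, pa.2.+1) else true)))); last first.
  move=> pa paB; rewrite /dim_pair /=; congr (_ && _).
  rewrite (has_inj _ U paB).
  have := has_inj (fun pb => (((pb.2 == pa.2) && (pa.1 < pb.1)) || (pb.2 < pa.2)) &&
     (if pa.2.+1 < size (nth [::] T pa.1) then t <= ent T (pa.1, pa.2.+1) else true)) U pbB.
  by rewrite Epb /=.
rewrite boxesE count_flatten -map_comp /Q kE cE -sumn_bool.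
congr sumn; apply/eq_in_map => r; rewrite mem_iota add0n => /andP[_ Hr] /=.
rewrite count_map.
rewrite (@eq_count _ _ (fun c' => [&& nth 0 (nth [::] T r) c' < t,
   ((c == c') && (r < k)) || (c < c') &
   (if c'.+1 < size (nth [::] T r) then t <= nth 0 (nth [::] T r) c'.+1 else true)])) //.
rewrite row_count ?HS // -/(Lc T r t).
case: (Lc T r t) => [|L] //=.
by rewrite eqSS ltnS orbC eq_sym.
Qed.

Lemma inv_path mu i F m : gp_path mu i F m -> Inv mu (sumn mu) i F m.
Proof.
elim => [|i' F' m' j Hi _ IH Hj]; first exact: inv_root.
exact: inv_step.
Qed.

Lemma final mu n T m : Inv mu n 0 T m -> row_strict mu n T /\ (forall t, Phi n T t = m t).
Proof.
move=> [_ Hsz Hrows Hcnt Hm].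
have Rw : forall r, r < size T -> size (nth [::] T r) = nth 0 mu r /\ sorted ltn (nth [::] T r)
     /\ all (fun x => 0 < x <= n) (nth [::] T r).
  move=> r Hr; have [Sz [z [s [E [S A]]]]] := Hrows r Hr.
  have z0 : z = 0.
    have := count_row_le (pred1 0) (mem_nth [::] Hr); rewrite Hcnt eqxx E (cnt0_row _ A).
    by rewrite leqn0 => /eqP.
  by move: E; rewrite z0 /= => E; rewrite E in Sz *.
have Hp : perm_eq (flatten T) (iota 1 n).
  apply/allP => x _ /=; apply/eqP.
  transitivity (count (pred1 x) (flatten T)) => //.
  rewrite Hcnt count_uniq_mem ?iota_uniq // mem_iota add1n ltnS.
  by case: x.
have HS : forall r, r < size T -> sorted ltn (nth [::] T r) by move=> r /Rw [_ []].
have key : forall t, 0 < t <= n -> D_card T n t = Q T t.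
  move=> t Ht; apply: key_D => //; by rewrite (perm_mem Hp) mem_iota add1n ltnS.
split.
  apply/and3P; split => //.
    apply/eqP/(@eq_from_nth _ 0); first by rewrite size_map.
    by move=> r; rewrite size_map => Hr; rewrite (nth_map [::]) //; case: (Rw r Hr).
  by apply/(all_nthP [::]) => r /HS.
move=> t; rewrite Hm /Phi.
case: t => [|[|t]] //=.
  case: ifP => Hn //; rewrite -key ?Hn //.
  rewrite /D_card; apply/esym/eqP; rewrite -leqn0 leqNgt -has_count.
  apply/hasP => -[a]; rewrite mem_iota => /andP[a1 _] /andP[H _].
  by rewrite ltnNge a1 in H.
by case: ifP => Hn //; rewrite key //.
Qed.



Theorem mainTheorem6 (n : nat) (mu : seq nat) :
  is_partition mu n ->
  forall (T : filling) (m : monomial),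
    gp_path mu 0 T m ->
    row_strict mu n T /\ (forall t, Phi n T t = m t).
Proof.
move=> /andP[/eqP Hn _] T m /inv_path; rewrite Hn; exact: final.
Qed.
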